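(* For types $\sigma,\tau\in\mathbb{T}_C$: $\sigma\le\tau$ if and only if for each path $\pi\in\mathbb{P}(\tau)$ there exists a path $\pi'\in\mathbb{P}(\sigma)$ with $\pi'\le\pi$ such that: if $\pi\equiv\alpha$ (resp. $\pi\equiv a$) then $\pi'\equiv\alpha$ (resp. $\pi'\equiv a$); if $\pi\equiv\sigma_2\to\tau_2$ then $\pi'\equiv\sigma_1\to\tau_1$ with $\sigma_2\le\sigma_1$ and $\tau_1\le\tau_2$; if $\pi\equiv c(\tau_1)$ then $\pi'\equiv c(\sigma_1)$ with $\sigma_1\le\tau_1$.
   Context: Types $\mathbb{T}_C\ni\tau ::= a\mid\alpha\mid\omega\mid\tau_1\to\tau_2\mid\tau_1\cap\tau_2\mid c(\tau)$ ($a$ constants, $\alpha$ type variables, $c$ unary constructors). Subtyping $\le$: least preorder with $\sigma\le\omega$; $\omega\le\omega\to\omega$; $\sigma\cap\tau\le\sigma$; $\sigma\cap\tau\le\tau$; $\sigma\le\tau_1,\sigma\le\tau_2\Rightarrow\sigma\le\tau_1\cap\tau_2$; $(\sigma\to\tau_1)\cap(\sigma\to\tau_2)\le\sigma\to\tau_1\cap\tau_2$; $\sigma_2\le\sigma_1,\tau_1\le\tau_2\Rightarrow\sigma_1\to\tau_1\le\sigma_2\to\tau_2$; $\tau_1\le\tau_2\Rightarrow c(\tau_1)\le c(\tau_2)$; $c(\tau_1)\cap c(\tau_2)\le c(\tau_1\cap\tau_2)$. Paths: $\pi ::= a\mid\alpha\mid\sigma\to\pi\mid c(\omega)\mid c(\pi)$.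 $\mathbb{P}(a)=\{a\}$, $\mathbb{P}(\alpha)=\{\alpha\}$, $\mathbb{P}(\omega)=\emptyset$, $\mathbb{P}(\sigma\to\tau)=\{\sigma\to\pi\mid\pi\in\mathbb{P}(\tau)\}$, $\mathbb{P}(\sigma\cap\tau)=\mathbb{P}(\sigma)\cup\mathbb{P}(\tau)$, $\mathbb{P}(c(\tau))=\{c(\omega)\}$ if $\mathbb{P}(\tau)=\emptyset$, else $\{c(\pi)\mid\pi\in\mathbb{P}(\tau)\}$. $\equiv$ denotes syntactic identity. *)

(* Defs.v *)
From Stdlib Require Import List.
Import ListNotations.
Set Implicit Arguments.

Section Types.
Variables A V C : Type.

Inductive ty : Type :=
| Const : A -> ty
| Var : V -> ty
| Omega : ty
| Arr : ty -> ty -> ty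
| Cap : ty -> ty -> ty
| Ctor : C -> ty -> ty.

Inductive sub : ty -> ty -> Prop :=
| sub_refl : forall s, sub s s
| sub_trans : forall s t u, sub s t -> sub t u -> sub s u
| sub_omega : forall s, sub s Omega
| sub_omega_arr : sub Omega (Arr Omega Omega)
| sub_capl : forall s t, sub (Cap s t) s
| sub_capr : forall s t, sub (Cap s t) t
| sub_glb : forall s t1 t2, sub s t1 -> sub s t2 -> sub s (Cap t1 t2)
| sub_arr_cap : forall s t1 t2,
    sub (Cap (Arr s t1) (Arr s t2)) (Arr s (Cap t1 t2))
| sub_arr : forall s1 s2 t1 t2, sub s2 s1 -> sub t1 t2 -> sub (Arr s1 t1) (Arr s2 t2)
| sub_ctor : forall c t1 t2, sub t1 t2 -> sub (Ctor c t1) (Ctor c t2)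
| sub_ctor_cap : forall c t1 t2,
    sub (Cap (Ctor c t1) (Ctor c t2)) (Ctor c (Cap t1 t2)).

Fixpoint paths (t : ty) : list ty :=
  match t with
  | Const a => [Const a]
  | Var x => [Var x]
  | Omega => []
  | Arr s t' => map (fun p => Arr s p) (paths t')
  | Cap s t' => paths s ++ paths t'
  | Ctor c t' =>
      match paths t' with
      | [] => [Ctor c Omega]
      | ps => map (fun p => Ctor c p) ps
      end
  end.

Definition path_match (pi' pi : ty) : Prop :=
  match pi with
  | Var x => pi' = Var x
  | Const a => pi' = Const a
  | Arr s2 t2 => exists s1 t1, pi' = Arr s1 t1 /\ sub s2 s1 /\ sub t1 t2
  | Ctor c t1 => exists s1, pi' = Ctor c s1 /\ sub s1 t1
  | Omega => False   (* not a path *)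
  | Cap _ _ => False (* not a path *)
  end.

End Types.

(* Main.v *)
Require Import Defs.
From Stdlib Require Import List.
Import ListNotations.

Definition bigcap {A V C : Type} (l : list (ty A V C)) : ty A V C :=
  fold_right (@Cap A V C) (@Omega A V C) l.

Lemma paths_shape {A V C : Type} (t : ty A V C) :
  forall pi, In pi (paths t) -> path_match pi pi.
Proof.
  induction t; simpl; intros pi H.
  - destruct H as [<-|[]]; reflexivity.
  - destruct H as [<-|[]]; reflexivity.
  - destruct H.
  - apply in_map_iff in H. destruct H as [p [<- _]]. simpl.
    exists t1, p; repeat split; apply sub_refl.
  - apply in_app_or in H; destruct H; auto.
  - destruct (paths t) eqn:E.
    + destruct H as [<-|[]]. simpl. exists (Omega _ _ _); split; [reflexivity|apply sub_refl].
    + assert (H' : In pi (map (fun p => Ctor c p) (t0::l))) by exact H.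
      apply in_map_iff in H'. destruct H' as [p [<- _]]. simpl.
      exists p; split; [reflexivity|apply sub_refl].
Qed.

Definition R {A V C : Type} (s t : ty A V C) : Prop :=
  forall pi, In pi (paths t) ->
     exists pi', In pi' (paths s) /\ sub pi' pi /\ path_match pi' pi.

Lemma R_incl {A V C : Type} (s t : ty A V C) :
  (forall pi, In pi (paths t) -> In pi (paths s)) -> R s t.
Proof.
  intros H pi Hpi. exists pi. split; [auto|split; [apply sub_refl|]].
  eapply paths_shape; eauto.
Qed.

Lemma match_trans {A V C : Type} (p1 p2 p3 : ty A V C) :
  path_match p1 p2 -> path_match p2 p3 -> path_match p1 p3.
Proof.
  intros H1 H2. destruct p3; simpl in *; subst; simpl in *; auto; try contradiction.
  - destruct H2 as [s1 [t1 [-> [Ha Hb]]]]. simpl in H1.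
    destruct H1 as [s0 [t0 [-> [Hc Hd]]]].
    exists s0, t0; repeat split; eapply sub_trans; eauto.
  - destruct H2 as [s1 [-> Ha]]. simpl in H1. destruct H1 as [s0 [-> Hb]].
    exists s0; split; [reflexivity|eapply sub_trans; eauto].
Qed.

Lemma ctor_paths_nonempty {A V C : Type} (c : C) (t : ty A V C) :
  exists q, In (Ctor c q) (paths (Ctor c t)).
Proof.
  simpl. destruct (paths t) eqn:E.
  - exists (Omega _ _ _); left; reflexivity.
  - exists t0; left; reflexivity.
Qed.

Lemma sound {A V C : Type} (s t : ty A V C) : sub s t -> R s t.
Proof.
  induction 1.
  - apply R_incl; auto.
  - intros pi Hpi. destruct (IHsub2 pi Hpi) as [p2 [H1 [H2 H3]]].
    destruct (IHsub1 p2 H1) as [p1 [H4 [H5 H6]]].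
    exists p1; repeat split; auto. eapply sub_trans; eauto.
    eapply match_trans; eauto.
  - intros pi [].
  - intros pi [].
  - apply R_incl; intros; simpl; apply in_or_app; auto.
  - apply R_incl; intros; simpl; apply in_or_app; auto.
  - intros pi Hpi. simpl in Hpi. apply in_app_or in Hpi. destruct Hpi; auto.
  - apply R_incl; intros pi H; simpl in *. rewrite map_app in H. exact H.
  - intros pi Hpi. simpl in Hpi. apply in_map_iff in Hpi.
    destruct Hpi as [p [<- Hp]]. destruct (IHsub2 p Hp) as [p' [H1 [H2 H3]]].
    exists (Arr s1 p'). split; [simpl; apply in_map; auto|split].
    + apply sub_arr; auto.
    + simpl. exists s1, p'; auto.
  - intros pi Hpi. simpl in Hpi. destruct (paths t2) eqn:E.
    + destruct Hpi as [<-|[]]. destruct (ctor_paths_nonempty c t1) as [q Hq].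
      exists (Ctor c q). split; auto. split.
      * apply sub_ctor, sub_omega.
      * simpl. exists q; split; auto. apply sub_omega.
    + assert (Hp : exists p, pi = Ctor c p /\ In p (paths t2)).
      { assert (H' : In pi (map (fun p => Ctor c p) (t::l))) by exact Hpi.
        apply in_map_iff in H'. destruct H' as [p [<- Hp]]. exists p.
        rewrite E; auto. }
      destruct Hp as [p [-> Hp]]. destruct (IHsub p Hp) as [p' [H1 [H2 H3]]].
      exists (Ctor c p'). split.
      * simpl. destruct (paths t1); [destruct H1|].
        exact (in_map (fun p => Ctor c p) _ _ H1).
      * split; [apply sub_ctor; auto|]. simpl. exists p'; auto.
  - apply R_incl. intros pi Hpi. simpl in *.
    destruct (paths t1) eqn:E1; destruct (paths t2) eqn:E2; simpl in *;
      rewrite ?app_nil_r, ?map_app, ?in_app_iff in *; simpl in *; tauto.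
Qed.

Lemma path_sub {A V C : Type} (s : ty A V C) :
  forall pi, In pi (paths s) -> sub s pi.
Proof.
  induction s as [| | |s1 IH1 s2 IH2|s1 IH1 s2 IH2|c s IHs]; simpl; intros pi H.
  - destruct H as [<-|[]]; apply sub_refl.
  - destruct H as [<-|[]]; apply sub_refl.
  - destruct H.
  - apply in_map_iff in H. destruct H as [p [<- Hp]].
    apply sub_arr; [apply sub_refl|auto].
  - apply in_app_or in H; destruct H.
    + eapply sub_trans; [apply sub_capl|auto].
    + eapply sub_trans; [apply sub_capr|auto].
  - destruct (paths s) eqn:E.
    + destruct H as [<-|[]]. apply sub_ctor, sub_omega.
    + assert (H' : In pi (map (fun p => Ctor c p) (t::l))) by exact H.
      apply in_map_iff in H'. destruct H' as [p [<- Hp]].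
      apply sub_ctor. apply IHs; auto.
Qed.

Lemma bigcap_glb {A V C : Type} (s : ty A V C) l :
  (forall x, In x l -> sub s x) -> sub s (bigcap l).
Proof.
  induction l; simpl; intros H.
  - apply sub_omega.
  - apply sub_glb; auto.
Qed.

Lemma bigcap_le {A V C : Type} (l : list (ty A V C)) :
  forall x, In x l -> sub (bigcap l) x.
Proof.
  induction l; simpl; intros x H; [destruct H|].
  destruct H as [<-|H]; [apply sub_capl|].
  eapply sub_trans; [apply sub_capr|auto].
Qed.

Lemma bigcap_arr {A V C : Type} (s : ty A V C) l :
  sub (bigcap (map (Arr s) l)) (Arr s (bigcap l)).
Proof.
  induction l; simpl.
  - eapply sub_trans; [apply sub_omega_arr|]. apply sub_arr; apply sub_omega || apply sub_refl.
  - eapply sub_trans; [|apply sub_arr_cap].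
    apply sub_glb; [apply sub_capl|]. eapply sub_trans; [apply sub_capr|auto].
Qed.

Lemma bigcap_ctor {A V C : Type} (c : C) (l : list (ty A V C)) :
  l <> [] -> sub (bigcap (map (Ctor c) l)) (Ctor c (bigcap l)).
Proof.
  induction l as [|a l IH]; intros Hne; [congruence|].
  destruct l as [|b l].
  - simpl. eapply sub_trans; [apply sub_capl|]. apply sub_ctor.
    apply sub_glb; [apply sub_refl|apply sub_omega].
  - change (sub (Cap (Ctor c a) (bigcap (map (Ctor c) (b :: l))))
                (Ctor c (Cap a (bigcap (b :: l))))).
    eapply sub_trans; [|apply sub_ctor_cap].
    apply sub_glb; [apply sub_capl|]. eapply sub_trans; [apply sub_capr|].
    apply IH; congruence.
Qed.

Lemma bigcap_paths {A V C : Type} (t : ty A V C) : sub (bigcap (paths t)) t.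
Proof.
  induction t; simpl.
  - apply sub_capl.
  - apply sub_capl.
  - apply sub_omega.
  - eapply sub_trans; [apply bigcap_arr|]. apply sub_arr; [apply sub_refl|auto].
  - apply sub_glb.
    + eapply sub_trans; [|apply IHt1]. apply bigcap_glb. intros x Hx.
      apply bigcap_le, in_or_app; auto.
    + eapply sub_trans; [|apply IHt2]. apply bigcap_glb. intros x Hx.
      apply bigcap_le, in_or_app; auto.
  - destruct (paths t) eqn:E.
    + simpl in *. eapply sub_trans; [apply sub_capl|]. apply sub_ctor; auto.
    + eapply sub_trans; [exact (bigcap_ctor c (t0 :: l) ltac:(congruence))|].
      apply sub_ctor; auto.
Qed.

Theorem lemma4p10 (A V C : Type) (sigma tau : ty A V C) :
  sub sigma tau <->
  (forall pi, In pi (paths tau) ->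
     exists pi', In pi' (paths sigma) /\ sub pi' pi /\ path_match pi' pi).
Proof.
  split.
  - apply sound.
  - intros H. eapply sub_trans; [|apply bigcap_paths]. apply bigcap_glb.
    intros x Hx. destruct (H x Hx) as [p [H1 [H2 _]]].
    eapply sub_trans; [apply path_sub; eauto|auto].
Qed.
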